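(* Let $n\ge 2$ and let $T_n^{op}$ be the monoid of all maps $f\colon[n]\to[n]$ with product $(fg)(i)=f(g(i))$ (the opposite of the full transformation monoid $T_n$). Let $X$ be a faithful right $T_n^{op}$-set (action by total maps). Then $X$ contains a $T_n^{op}$-invariant subset isomorphic, as a right $T_n^{op}$-set, to the power set $2^{[n]}$ with action $A\cdot f=f^{-1}(A)$. Consequently, the minimal degree of a faithful action of $T_n^{op}$ by total transformations on the right is $2^n$.
   Context: $[n]=\{1,\dots,n\}$. A right $M$-set for a monoid $M$ is a set $X$ with a map $X\times M\to X$ satisfying $(xf)g=x(fg)$; it is faithful if distinct elements of $M$ act as distinct maps. The minimal degree is the least cardinality of a faithful right $T_n^{op}$-set. *)

(* Defs.v *)
From mathcomp Require Import all_boot.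
Set Implicit Arguments. Unset Strict Implicit. Unset Printing Implicit Defensive.

Definition Tn (n : nat) := {ffun 'I_n -> 'I_n}.

Definition Tmul (n : nat) (f g : Tn n) : Tn n := [ffun i => f (g i)].

Definition is_right_act (n : nat) (X : Type) (act : X -> Tn n -> X) : Prop :=
  forall (x : X) (f g : Tn n), act (act x f) g = act x (Tmul f g).

Definition faithful_act (n : nat) (X : Type) (act : X -> Tn n -> X) : Prop :=
  forall f g : Tn n, (forall x : X, act x f = act x g) -> f = g.

Definition pow_act (n : nat) (A : {set 'I_n}) (f : Tn n) : {set 'I_n} :=
  f @^-1: A.

Definition faithful_degree (n d : nat) : Prop :=
  exists (X : finType) (act : X -> Tn n -> X),
    [/\ #|X| = d, is_right_act act & faithful_act act].

(* Main.v *)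
From Stdlib Require Import Classical.
Require Import Defs.
From mathcomp Require Import all_boot.


Lemma part1 (n : nat) (hn : 2 <= n) :
  (forall (X : Type) (act : X -> Tn n -> X),
      is_right_act act -> faithful_act act ->
      exists phi : {set 'I_n} -> X,
        injective phi /\
        forall (A : {set 'I_n}) (f : Tn n), phi (pow_act A f) = act (phi A) f).
Proof.
case: n hn => [|[|n]] // _ X act Hact Hf.
pose c0 : Tn n.+2 := [ffun _ => ord0].
pose c1 : Tn n.+2 := [ffun _ => ord_max].
have [z Hz] : exists z, act z c0 <> act z c1.
  apply: NNPP => H; have : c0 = c1.
    apply: Hf => x; apply: NNPP => Hx; apply: H; by exists x.
  by move/ffunP/(_ ord0); rewrite !ffunE.
pose chi (A : {set 'I_n.+2}) : Tn n.+2 := [ffun i => if i \in A then ord_max else ord0].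
exists (fun A => act z (chi A)); split.
  move=> A B HAB; apply/setP => i.
  have E : forall C, act (act z (chi C)) [ffun _ => i] = if i \in C then act z c1 else act z c0.
    move=> C; rewrite Hact; case: ifP => Hi; (congr act; apply/ffunP => j);
      by rewrite !ffunE Hi.
  have := E A; rewrite HAB E.
  by case: (i \in A); case: (i \in B) => // H; case: Hz; rewrite H.
move=> A f; rewrite Hact; congr act; apply/ffunP => i.
by rewrite !ffunE /pow_act inE.
Qed.

Theorem theorem3p2 (n : nat) (hn : 2 <= n) :
  (forall (X : Type) (act : X -> Tn n -> X),
      is_right_act act -> faithful_act act ->
      exists phi : {set 'I_n} -> X,
        injective phi /\
        forall (A : {set 'I_n}) (f : Tn n), phi (pow_act A f) = act (phi A) f)
  /\ (faithful_degree n (2 ^ n) /\ forall d, faithful_degree n d -> 2 ^ n <= d).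
Proof.
split; first exact: part1.
split.
  exists {set 'I_n}, (@pow_act n); split.
  - by rewrite -cardsT -powersetT card_powerset cardsT card_ord.
  - move=> A f g; apply/setP => i; by rewrite /pow_act !inE ffunE.
  - move=> f g H; apply/ffunP => i.
    have := H [set f i]; move/setP/(_ i); rewrite /pow_act !inE eqxx.
    by move/esym/eqP.
move=> d [X [act [<- Ha Hf]]].
have [phi [Hi _]] := @part1 n hn _ _ Ha Hf.
have := leq_card _ Hi.
by rewrite -cardsT -powersetT card_powerset cardsT card_ord.
Qed.
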